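(* Let $\mathcal H$ be a complex Hilbert space (of any dimension) and let $A_1,\ldots,A_n,B$ be closed subspaces of $\mathcal H$ ($n\ge 0$). Then $A_1\mathbin{\&}\cdots\mathbin{\&}A_n\le B$ if and only if $[A_n]\cdots[A_1]\mathcal H\subseteq B$.
   Context: In the orthomodular lattice of closed subspaces of $\mathcal H$ (order $\subseteq$, $\neg A=A^\perp$, $\vee$ closed span, $\wedge$ intersection), $A\mathbin{\&}B=(A\vee B^\perp)\wedge B$; $\&$ associates to the left and the empty $\&$-product ($n=0$) is $\mathcal H$. $[A]$ denotes the orthogonal projection onto $A$; for $n=0$ the product $[A_n]\cdots[A_1]$ is the identity. *)

(* Defs.v *)
From HB Require Import structures.
From mathcomp Require Import all_boot all_order all_algebra.
From mathcomp Require Import boolp classical_sets reals.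
From mathcomp Require Import complex.
From Stdlib Require Import ClassicalEpsilon.
Set Implicit Arguments. Unset Strict Implicit. Unset Printing Implicit Defensive.
Import Order.TTheory GRing.Theory Num.Theory.
Local Open Scope ring_scope.
Local Open Scope classical_set_scope.

Record hilbert (R : realType) (V : lmodType R[i]) := Hilbert {
  inner : V -> V -> R[i];
  innerD : forall x y z, inner (x + y) z = inner x z + inner y z;
  innerZ : forall (a : R[i]) x y, inner (a *: x) y = a * inner x y;
  innerC : forall x y, inner y x = conjc (inner x y);
  inner_Im : forall x, complex.Im (inner x x) = 0;
  inner_ge0 : forall x, 0 <= complex.Re (inner x x);
  inner_eq0 : forall x, inner x x = 0 -> x = 0;
  inner_complete : forall u : nat -> V,
    (forall e : R, 0 < e -> exists N, forall m n, (N <= m)%N -> (N <= n)%N ->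
        Num.sqrt (complex.Re (inner (u m - u n) (u m - u n))) < e) ->
    exists l, forall e : R, 0 < e -> exists N, forall n, (N <= n)%N ->
        Num.sqrt (complex.Re (inner (u n - l) (u n - l))) < e
}.

Section HilbertDefs.
Variables (R : realType) (V : lmodType R[i]) (H : hilbert V).

Definition hnorm (x : V) : R := Num.sqrt (complex.Re (inner H x x)).

Definition hconv (u : nat -> V) (l : V) : Prop :=
  forall e : R, 0 < e -> exists N, forall n, (N <= n)%N -> hnorm (u n - l) < e.

Definition closed_subspace (A : set V) : Prop :=
  [/\ A 0,
      (forall x y, A x -> A y -> A (x + y)),
      (forall (a : R[i]) x, A x -> A (a *: x)) &
      (forall u l, (forall n, A (u n)) -> hconv u l -> A l)].

Definition ortho (A : set V) : set V :=
  [set x | forall y, A y -> inner H x y = 0].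

Definition cjoin (A B : set V) : set V :=
  [set x | forall C, closed_subspace C -> A `<=` C -> B `<=` C -> C x].

Definition cmeet (A B : set V) : set V := A `&` B.

(* Sasaki-type product  A & B = (A \/ B^perp) /\ B *)
Definition andthen (A B : set V) : set V := cmeet (cjoin A (ortho B)) B.

Definition andthen_seq (As : seq (set V)) : set V := foldl andthen setT As.

Definition is_proj (A : set V) (x y : V) : Prop :=
  A y /\ forall z, A z -> inner H (x - y) z = 0.

(* [A] : the orthogonal projection onto A (for closed subspaces A such a y
   exists uniquely by the projection theorem) *)
Definition proj (A : set V) (x : V) : V :=
  epsilon (inhabits (0 : V)) (is_proj A x).

(* [A_n] ... [A_1] x  (identity for n = 0) *)
Definition proj_seq (As : seq (set V)) (x : V) : V :=
  foldl (fun y A => proj A y) x As.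

End HilbertDefs.

(* Main.v *)
Require Import Defs.
From HB Require Import structures.
From mathcomp Require Import all_boot all_order all_algebra.
From mathcomp Require Import boolp classical_sets reals.
From mathcomp Require Import complex.
From mathcomp Require Import lra.
From Stdlib Require Import ClassicalEpsilon.
Set Implicit Arguments. Unset Strict Implicit. Unset Printing Implicit Defensive.
Import Order.TTheory GRing.Theory Num.Theory.
Local Open Scope ring_scope.
Local Open Scope classical_set_scope.
Local Open Scope complex_scope.

Section Basic.
Variables (R : realType) (V : lmodType R[i]) (H : hilbert V).
Local Notation ip := (inner H).
Definition q (v : V) : R := complex.Re (ip v v).

Lemma ip0l y : ip 0 y = 0.
Proof. have h := innerD H 0 0 y; rewrite addr0 in h.
by apply: (addrI (ip 0 y)); rewrite addr0 -h. Qed.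
Lemma ipNl x y : ip (- x) y = - ip x y.
Proof. by apply/eqP; rewrite -subr_eq0 opprK -innerD addNr ip0l. Qed.
Lemma ipBl x y z : ip (x - y) z = ip x z - ip y z.
Proof. by rewrite innerD ipNl. Qed.
Lemma ipDr x y z : ip x (y + z) = ip x y + ip x z.
Proof. by rewrite innerC innerD rmorphD /= -!innerC. Qed.
Lemma ipZr a x y : ip x (a *: y) = conjc a * ip x y.
Proof. by rewrite innerC innerZ rmorphM /= -innerC. Qed.
Lemma ip0r x : ip x 0 = 0.
Proof. by rewrite innerC ip0l conjc0. Qed.
Lemma ipNr x y : ip x (- y) = - ip x y.
Proof. by rewrite innerC ipNl rmorphN /= -innerC. Qed.
Lemma ipBr x y z : ip x (y - z) = ip x y - ip x z.
Proof. by rewrite ipDr ipNr. Qed.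

Lemma ReJ (c : R[i]) : complex.Re (conjc c) = complex.Re c.
Proof. by case: c. Qed.
Lemma ReD (a b : R[i]) : complex.Re (a + b) = complex.Re a + complex.Re b.
Proof. by case: a; case: b. Qed.
Lemma ReN (a : R[i]) : complex.Re (- a) = - complex.Re a.
Proof. by case: a. Qed.

Lemma qD x y : q (x + y) = q x + q y + 2 * complex.Re (ip x y).
Proof.
rewrite /q innerD !ipDr !ReD [ip y x]innerC ReJ; lra.
Qed.
Lemma qB x y : q (x - y) = q x + q y - 2 * complex.Re (ip x y).
Proof. rewrite qD ipNr ReN /q ipNl ipNr opprK; lra. Qed.
Lemma q_ge0 x : 0 <= q x. Proof. exact: inner_ge0. Qed.
Lemma ip_self x : ip x x = (q x)%:C.
Proof. by rewrite /q; move: (inner_Im H x); case: (ip x x) => a b /= ->. Qed.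
Lemma q_eq0 x : q x = 0 -> x = 0.
Proof. by move=> h; apply: (@inner_eq0 _ _ H x); rewrite ip_self h. Qed.
Lemma qN x : q (- x) = q x.
Proof. by rewrite /q ipNl ipNr opprK. Qed.
Lemma qZ (s : R) x : q (s%:C *: x) = s ^+ 2 * q x.
Proof. rewrite /q innerZ ipZr conjc_real ip_self /=; rewrite -/(q x); by rewrite !(mul0r, mulr0, subr0, addr0) expr2 mulrA. Qed.

Lemma Re_real (s : R) (c : R[i]) : complex.Re (s%:C * c) = s * complex.Re c.
Proof. by case: c => a b /=; rewrite mul0r subr0. Qed.

Lemma csN (A : set V) x : closed_subspace H A -> A x -> A (- x).
Proof. by case=> _ _ AZ _ Ax; rewrite -scaleN1r; apply: AZ. Qed.
Lemma csB (A : set V) x y : closed_subspace H A -> A x -> A y -> A (x - y).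
Proof. move=> cA Ax Ay; case: (cA) => _ AD _ _; exact: AD Ax (csN cA Ay). Qed.

Lemma hconv_q u l : hconv H u l ->
  forall d : R, 0 < d -> exists N, forall n, (N <= n)%N -> q (u n - l) < d.
Proof.
move=> hc d d0; have sd : 0 < Num.sqrt d by rewrite sqrtr_gt0.
have [N hN] := hc _ sd.
exists N => n /hN; rewrite /hnorm ltr_sqrt //.
Qed.

Lemma q_hconv u l :
  (forall d : R, 0 < d -> exists N, forall n, (N <= n)%N -> q (u n - l) < d) ->
  hconv H u l.
Proof.
move=> hq e e0; have [N hN] := hq (e ^+ 2) (exprn_gt0 _ e0).
exists N => n /hN h; rewrite /hnorm -[e](gtr0_norm e0) -sqrtr_sqr ltr_sqrt //.
exact: exprn_gt0.
Qed.

Lemma qD_le u v (s : R) : 0 < s -> q (u + v) <= (1 + s) * q u + (1 + s^-1) * q v.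
Proof.
move=> s0; rewrite qD.
have h := q_ge0 (s%:C *: u - v); rewrite qB qZ innerZ Re_real in h.
suff : 2 * complex.Re (ip u v) <= s * q u + s^-1 * q v by lra.
rewrite -(ler_pM2l s0) mulrDr [s * (s^-1 * _)]mulrA mulfV ?gt_eqF // mul1r.
rewrite expr2 in h; lra.
Qed.

Lemma small_inv (e : R) : 0 < e -> exists N, forall n, (N <= n)%N -> n.+1%:R^-1 < e.
Proof.
move=> e0; have ie : 0 < e^-1 by rewrite invr_gt0.
have := archi_boundP (ltW ie).
set K := Num.bound _ => hK; exists K => n hn.
have n0 : 0 < n.+1%:R :> R by rewrite ltr0n.
rewrite -[_^-1]mul1r ltr_pdivrMr //.
rewrite -(ltr_pM2l ie) mulrA mulVf ?gt_eqF // mul1r mulr1.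
apply: (lt_le_trans hK); rewrite ler_nat; exact: (leq_trans hn).
Qed.


Lemma proj_exists (A : set V) x : closed_subspace H A -> exists y, is_proj H A x y.
Proof.
move=> cA; case: (cA) => A0 AD AZ Alim.
pose E := [set r | exists a, A a /\ r = q (x - a)].
have En : E !=set0 by exists (q (x - 0)), 0.
have Elb : lbound E 0 by move=> r [a [_ ->]]; exact: q_ge0.
have hinf : has_inf E by split => //; exists 0.
pose d := inf E.
have dle : forall a, A a -> d <= q (x - a).
  by move=> a Aa; apply: (ge_inf (proj2 hinf)); exists a.
have d0 : 0 <= d by apply: lb_le_inf.
have : forall n : nat, exists a, A a /\ q (x - a) < d + n.+1%:R^-1.
  move=> n; have en : 0 < n.+1%:R^-1 :> R by rewrite invr_gt0 ltr0n.
  have [r [a [Aa ->]] hr] := inf_adherent en hinf.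
  by exists a.
case/choice => a Ha.
have par : forall m n, q (a m - a n) <= 2 * m.+1%:R^-1 + 2 * n.+1%:R^-1.
  move=> m n; have [Am hm] := Ha m; have [An hn] := Ha n.
  pose h := (1 / 2 : R[i]) *: (a n + a m).
  have Ah : A h by apply: AZ; apply: AD.
  have hw := dle _ Ah.
  have e1 : (x - a n) - (x - a m) = a m - a n.
    by rewrite opprB addrC addrA subrK.
  have e2 : (x - a n) + (x - a m) = (x - h) + (x - h).
    rewrite addrACA -opprD addrACA -opprD; congr (_ - _).
    by rewrite /h -scalerDl -splitr scale1r addrC.
  have p1 := qB (x - a n) (x - a m); rewrite e1 in p1.
  have p2 := qD (x - a n) (x - a m); rewrite e2 qD ip_self /= in p2.
  have T1 : q (a m - a n) = 2 * q (x - a n) + 2 * q (x - a m) - 4 * q (x - h) by lra.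
  move: hm hn T1 hw; rewrite -!/(_ / _); set em := _^-1; set en := _^-1. move=> *. lra.
have cau : forall e : R, 0 < e -> exists N, forall m n, (N <= m)%N -> (N <= n)%N ->
    Num.sqrt (complex.Re (ip (a m - a n) (a m - a n))) < e.
  move=> e e0; have e20 : 0 < e ^+ 2 / 4%:R by rewrite divr_gt0 ?exprn_gt0.
  have [N hN] := small_inv e20; exists N => m n hm hn.
  rewrite -[e](gtr0_norm e0) -sqrtr_sqr ltr_sqrt ?exprn_gt0 //.
  apply: (le_lt_trans (par m n)).
  have := hN _ hm; have := hN _ hn.
  set E2 := e ^+ 2 / 4%:R; have -> : e ^+ 2 = 4%:R * E2.
    by rewrite /E2 mulrC divfK // pnatr_eq0.
  set em := m.+1%:R^-1; set en := n.+1%:R^-1; move=> *; lra.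
have [y hy] := inner_complete cau.
have hy' : hconv H a y by [].
have Ay : A y by apply: (Alim a) => // n; case: (Ha n).
have dmin : q (x - y) <= d.
  apply/ler_addgt0Pr => eps eps0.
  have d10 : 0 < d + 1 by lra.
  pose s := eps / 3%:R / (d + 1).
  have s0 : 0 < s by rewrite /s !divr_gt0.
  pose K := 1 + s^-1.
  have K0 : 0 < K by rewrite /K ltr_wpDr // invr_ge0 ltW.
  pose del := eps / 3%:R / K.
  have del0 : 0 < del by rewrite /del !divr_gt0.
  have [N1 hN1] := hconv_q hy' del0.
  have e30 : 0 < eps / 3%:R by rewrite divr_gt0.
  have [N2 hN2] := small_inv e30.
  pose n := maxn N1 N2.
  have h1 := hN1 n (leq_maxl _ _); have h2 := hN2 n (leq_maxr _ _).
  have [_ h3] := Ha n.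
  have h4 : n.+1%:R^-1 <= 1 :> R by rewrite invf_le1 ?ltr0n // ler1n.
  have e4 : x - y = (x - a n) + (a n - y) by rewrite addrA subrK.
  have h5 := qD_le (x - a n) (a n - y) s0; rewrite -e4 in h5.
  have sd : s * (d + 1) = eps / 3%:R by rewrite /s divfK ?gt_eqF.
  have Kd : K * del = eps / 3%:R by rewrite /del mulrC divfK ?gt_eqF.
  have h6 : s * q (x - a n) <= s * (d + 1).
    apply: ler_wpM2l; [exact: ltW | move: h3 h4; set en := n.+1%:R^-1; move=> *; lra].
  have h7 : K * q (a n - y) <= K * del by apply: ler_wpM2l; apply: ltW.
  move: h2 h3 h4 h5 h6 h7; rewrite -/K; set en := n.+1%:R^-1; move=> *; lra.
have vari : forall z, A z -> complex.Re (ip (x - y) z) <= 0.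
  move=> z Az; rewrite leNgt; apply/negP => c0.
  move: c0; set c := complex.Re _ => c0.
  have qz1 : 0 < q z + 1 by have := q_ge0 z; lra.
  pose t := c / (q z + 1).
  have t0 : 0 < t by rewrite /t divr_gt0.
  have At : A (y + t%:C *: z) by apply: AD => //; apply: AZ.
  have h := dle _ At.
  rewrite opprD addrA qB qZ ipZr conjc_real Re_real -/c in h.
  have h2 : 2 * c <= t * q z.
    rewrite -(ler_pM2l t0); rewrite expr2 in h; lra.
  have h3 : t * (q z + 1) = c by rewrite /t divfK ?gt_eqF.
  lra.
have orth : forall z, A z -> ip (x - y) z = 0.
  move=> z Az.
  have r1 := vari _ Az; have r2 := vari _ (csN cA Az); rewrite ipNr ReN in r2.
  have Aiz : A ('i *: z) by apply: AZ.
  have r3 := vari _ Aiz; have r4 := vari _ (csN cA Aiz).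
  rewrite ipNr ReN ipZr in r4; rewrite ipZr in r3.
  move: r1 r2 r3 r4; case: (ip (x - y) z) => a1 b1 /= r1 r2 r3 r4.
  apply/eqP; rewrite eq_complex /=; apply/andP; split; apply/eqP; lra.
by exists y; split.
Qed.

Lemma proj_spec (A : set V) x : closed_subspace H A -> is_proj H A x (proj H A x).
Proof. by move=> cA; rewrite /proj; apply: epsilon_spec; exact: proj_exists. Qed.

Lemma proj_uniq (A : set V) x y1 y2 : closed_subspace H A ->
  is_proj H A x y1 -> is_proj H A x y2 -> y1 = y2.
Proof.
move=> cA [A1 o1] [A2 o2]; have A12 : A (y1 - y2) by apply: csB.
have e : y1 - y2 = (x - y2) - (x - y1) by rewrite opprB [RHS]addrC addrA subrK.
apply/eqP; rewrite -subr_eq0; apply/eqP; apply: (@inner_eq0 _ _ H).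
by rewrite {1}e ipBl o1 // o2 // subrr.
Qed.

Lemma projE (A : set V) x y : closed_subspace H A -> is_proj H A x y -> proj H A x = y.
Proof. by move=> cA h; apply: (proj_uniq cA (proj_spec x cA) h). Qed.

Lemma proj_id (A : set V) a : closed_subspace H A -> A a -> proj H A a = a.
Proof. by move=> cA Aa; apply: projE => //; split => // z _; rewrite subrr ip0l. Qed.

Lemma proj_orth (A : set V) v : closed_subspace H A -> Defs.ortho H A v -> proj H A v = 0.
Proof.
move=> cA hv; apply: projE => //; split; first by case: cA.
by move=> z Az; rewrite subr0; exact: hv.
Qed.

Lemma projD (A : set V) u v : closed_subspace H A ->
  proj H A (u + v) = proj H A u + proj H A v.
Proof.
move=> cA; have [A1 o1] := proj_spec u cA; have [A2 o2] := proj_spec v cA.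
apply: projE => //; split; first by case: (cA) => _ AD _ _; exact: AD.
by move=> z Az; rewrite opprD addrACA innerD o1 // o2 // addr0.
Qed.

Lemma projZ (A : set V) (a : R[i]) u : closed_subspace H A ->
  proj H A (a *: u) = a *: proj H A u.
Proof.
move=> cA; have [A1 o1] := proj_spec u cA.
apply: projE => //; split; first by case: (cA) => _ _ AZ _; exact: AZ.
by move=> z Az; rewrite -scalerBr innerZ o1 // mulr0.
Qed.

Lemma projB (A : set V) u v : closed_subspace H A ->
  proj H A (u - v) = proj H A u - proj H A v.
Proof. by move=> cA; rewrite projD // -scaleN1r projZ // scaleN1r. Qed.

Lemma proj_contr (A : set V) v : closed_subspace H A -> q (proj H A v) <= q v.
Proof.
move=> cA; have [A1 o1] := proj_spec v cA.
have e : v = proj H A v + (v - proj H A v) by rewrite addrC subrK.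
rewrite {2}e qD innerC o1 // conjc0 /=.
by have := q_ge0 (v - proj H A v); lra.
Qed.

Lemma proj_cont (A : set V) u l : closed_subspace H A -> hconv H u l ->
  hconv H (fun n => proj H A (u n)) (proj H A l).
Proof.
move=> cA hc; apply: q_hconv => d d0; have [N hN] := hconv_q hc d0.
by exists N => n /hN h; rewrite -projB //; apply: le_lt_trans h; apply: proj_contr.
Qed.

Lemma cjoin_cs (A B : set V) : closed_subspace H (cjoin H A B).
Proof.
split.
- by move=> C [C0 _ _ _] _ _.
- move=> x y hx hy C cC hA hB; case: (cC) => _ CD _ _.
  exact: CD (hx C cC hA hB) (hy C cC hA hB).
- move=> a x hx C cC hA hB; case: (cC) => _ _ CZ _; exact: CZ (hx C cC hA hB).
- move=> u l hu hl C cC hA hB; case: (cC) => _ _ _ Cl.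
  by apply: (Cl u) hl => n; exact: hu n C cC hA hB.
Qed.

Lemma cmeet_cs (A B : set V) : closed_subspace H A -> closed_subspace H B ->
  closed_subspace H (cmeet A B).
Proof.
case=> A0 AD AZ Al [B0 BD BZ Bl]; split.
- by split.
- by move=> x y [? ?] [? ?]; split; [apply: AD | apply: BD].
- by move=> a x [? ?]; split; [apply: AZ | apply: BZ].
- move=> u l hu hl; split; [apply: (Al u) hl | apply: (Bl u) hl] => n; by case: (hu n).
Qed.

Lemma main (As : seq (set V)) : (forall A, A \in As -> closed_subspace H A) ->
  closed_subspace H (andthen_seq H As) /\
  forall B, closed_subspace H B ->
    (andthen_seq H As `<=` B <-> (forall x : V, B (proj_seq H As x))).
Proof.
elim/last_ind: As => [|As A IH] hAs.
  rewrite /andthen_seq /proj_seq /=; split; first by split.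
  by move=> B cB; split => [h x | h x _]; [exact: h | exact: h].
have hAs' : forall A', A' \in As -> closed_subspace H A'.
  by move=> A' h; apply: hAs; rewrite mem_rcons inE h orbT.
have cA : closed_subspace H A by apply: hAs; rewrite mem_rcons inE eqxx.
case: (IH hAs') => cS hS.
have e1 : andthen_seq H (rcons As A) = andthen H (andthen_seq H As) A.
  by rewrite /andthen_seq foldl_rcons.
have e2 : forall x, proj_seq H (rcons As A) x = proj H A (proj_seq H As x).
  by move=> x; rewrite /proj_seq foldl_rcons.
rewrite e1; split; first by apply: cmeet_cs => //; apply: cjoin_cs.
move=> B cB; split.
- move=> hSB x; rewrite e2; apply: hSB; split; last by case: (proj_spec (proj_seq H As x) cA).
  move=> C cC SC OC; set px := proj_seq H As x.
  have Spx : andthen_seq H As px by apply: (proj1 (hS _ cS)).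
  have -> : proj H A px = px - (px - proj H A px) by rewrite opprB addrC subrK.
  apply: (csB cC); first exact: SC.
  by apply: OC => y Ay; case: (proj_spec px cA) => _ o; exact: o.
- move=> hPB s [hs As_].
  case: (cB) => B0 BD BZ Bl.
  pose C := [set v | B (proj H A v)].
  have cC : closed_subspace H C.
    split.
    + by rewrite /C /= proj_id //; case: cA.
    + by move=> x y; rewrite /C /= projD //; apply: BD.
    + by move=> a x; rewrite /C /= projZ //; apply: BZ.
    + move=> u l hu hl; rewrite /C /=; apply: (Bl _ _ hu); exact: proj_cont.
  have SC : andthen_seq H As `<=` C.
    by apply/(proj2 (hS C cC)) => x; rewrite /C /= -e2; exact: hPB.
  have OC : Defs.ortho H A `<=` C by move=> v hv; rewrite /C /= proj_orth.
  by have := hs C cC SC OC; rewrite /C /= proj_id.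
Qed.
End Basic.

Theorem lemmaA2 (R : realType) (V : lmodType R[i]) (H : hilbert V)
    (As : seq (set V)) (B : set V) :
  (forall A, A \in As -> closed_subspace H A) ->
  closed_subspace H B ->
  (andthen_seq H As `<=` B <-> (forall x : V, B (proj_seq H As x))).
Proof. by move=> hAs hB; exact: (proj2 (main hAs)) B hB. Qed.
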